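(* Let $n\ge3$ be odd, let $d,R\in\mathbb{Z}$ with $d\ne0$, $R$ not a square, $\gcd(d,R)=1$, and $D=d^2-R$. Suppose that for each prime divisor $p$ of $n$ there is a prime $q\ge3$ such that $v_q(D)$ is odd and $v_q(D)\not\equiv0\pmod p$. Then $f_n=f_n(Z,d,R)$ is irreducible in $\mathbb{Q}[Z]$.
   Context: $v_q$ denotes the $q$-adic valuation on $\mathbb{Q}\setminus\{0\}$. $f_n(Z,d,R)=\sum_{j=0}^{(n-1)/2}(-1)^j\frac{n}{n-j}\binom{n-j}{j}D^jZ^{n-2j}-2dD^{(n-1)/2}$, which equals $\sqrt D^{\,n}F_n(Z/\sqrt D)-2dD^{(n-1)/2}$ where $F_n(Z)=2T_n(Z/2)$ and $T_n$ is the Chebyshev polynomial of the first kind. *)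

(* Defs.v *)
From HB Require Import structures.
From mathcomp Require Import all_boot all_order all_algebra.
Set Implicit Arguments. Unset Strict Implicit. Unset Printing Implicit Defensive.
Import Order.TTheory GRing.Theory Num.Theory.
Local Open Scope ring_scope.

Definition Dval (d R : int) : int := d ^+ 2 - R.

Definition vq (q : nat) (z : int) : nat := logn q `|z|%N.

Definition f_poly (n : nat) (d R : int) : {poly rat} :=
  let D : rat := (Dval d R)%:~R in
  \sum_(j < (n.-1)./2.+1)
     (((-1) ^+ j * (n%:R / (n - j)%N%:R) * ('C((n - j)%N, j))%:R * D ^+ j)
        *: 'X^((n - 2 * j)%N))
  - (2 * d%:~R * D ^+ (n.-1)./2)%:P.

(* Main.v *)
Require Import Defs.
From HB Require Import structures.
From mathcomp Require Import all_boot all_order all_algebra.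
From mathcomp Require Import zify ring.
Import Order.TTheory GRing.Theory Num.Theory.
Local Open Scope ring_scope.

Lemma vqM q (a b : int) : a != 0 -> b != 0 -> vq q (a * b) = (vq q a + vq q b)%N.
Proof.
move=> a0 b0; rewrite /vq abszM lognM // absz_gt0 //.
Qed.

Lemma vq_dvd q e (a : int) : prime q -> a != 0 ->
  ((q ^ e)%:Z %| a)%Z = (e <= vq q a)%N.
Proof.
move=> pq a0; rewrite dvdzE /vq /=. by rewrite pfactor_dvdn // absz_gt0.
Qed.

Lemma minw (G : {poly int}) (w : nat -> nat) : G != 0 ->
  exists i, [/\ G`_i != 0, (forall j, G`_j != 0 -> (w i <= w j)%N) &
     (forall j, (j < i)%N -> G`_j != 0 -> (w i < w j)%N)].
Proof.
move=> G0.
have ex1 : exists m, [exists j : 'I_(size G), (G`_j != 0) && (w j == m)].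
  exists (w (size G).-1); apply/existsP.
  have Hs : ((size G).-1 < size G)%N by rewrite prednK // size_poly_gt0.
  exists (Ordinal Hs) => /=; rewrite eqxx andbT.
  by rewrite -lead_coefE lead_coef_eq0.
case: (ex_minnP ex1) => m /existsP [j0 /andP [Hj0 /eqP wj0]] minm.
have ex2 : exists i, (G`_i != 0) && (w i == m) by exists j0; rewrite Hj0 wj0 eqxx.
case: (ex_minnP ex2) => i /andP [Hi /eqP wi] mini.
exists i; split => //.
  move=> j Hj; rewrite wi; apply: minm; apply/existsP.
  have Hs : (j < size G)%N.
    by rewrite ltnNge; apply/negP => /(nth_default 0) => /eqP; rewrite (negbTE Hj).
  by exists (Ordinal Hs); rewrite /= Hj eqxx.
move=> j ji Hj; rewrite wi ltn_neqAle; apply/andP; split.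
  apply/negP => /eqP mj. have := mini j; rewrite Hj -mj eqxx /= => /(_ isT).
  by rewrite leqNgt ji.
apply: minm; apply/existsP.
have Hs : (j < size G)%N.
  by rewrite ltnNge; apply/negP => /(nth_default 0) => /eqP; rewrite (negbTE Hj).
by exists (Ordinal Hs); rewrite /= Hj eqxx.
Qed.

Definition wt q n V (P : {poly int}) i := (n * vq q P`_i + i * V)%N.

Lemma prodmin q n V (G r : {poly int}) iG iR : prime q ->
  G`_iG != 0 -> r`_iR != 0 ->
  (forall j, (j < iG)%N -> G`_j != 0 -> (wt q n V G iG < wt q n V G j)%N) ->
  (forall j, G`_j != 0 -> (wt q n V G iG <= wt q n V G j)%N) ->
  (forall j, (j < iR)%N -> r`_j != 0 -> (wt q n V r iR < wt q n V r j)%N) ->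
  (forall j, r`_j != 0 -> (wt q n V r iR <= wt q n V r j)%N) ->
  (G * r)`_(iG + iR) != 0 /\
  wt q n V (G * r) (iG + iR) = (wt q n V G iG + wt q n V r iR)%N.
Proof.
rewrite /wt => pq G0 r0 sG wG sR wR.
set m := (iG + iR)%N.
set e := vq q (G`_iG * r`_iR).
have eE : e = (vq q G`_iG + vq q r`_iR)%N by rewrite /e vqM.
have claim : forall j : 'I_m.+1, j != Ordinal (leq_addr iR iG : (iG < m.+1)%N) ->
    ((q ^ e.+1)%:Z %| G`_j * r`_(m - j))%Z.
  move=> j /eqP jne.
  have jneq : (j : nat) <> iG by move=> h; apply: jne; apply: val_inj.
  have jm : (j <= m)%N by rewrite -ltnS.
  have [->|Tn0] := eqVneq (G`_j * r`_(m - j)) 0; first exact: dvdz0.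
  have Gj : G`_j != 0 by apply: contraNneq Tn0 => ->; rewrite mul0r.
  have rj : r`_(m - j) != 0 by apply: contraNneq Tn0 => ->; rewrite mulr0.
  rewrite vq_dvd // vqM // eE.
  have := wG _ Gj; have := wR _ rj.
  case: (ltngtP j iG) => [ji|ij|//].
    have := sG _ ji Gj => h1 h2 h3.
    have : (n * (vq q G`_iG + vq q r`_iR) < n * (vq q G`_j + vq q r`_(m - j)))%N.
      have eV : (j * V + (m - j) * V = iG * V + iR * V)%N by rewrite -!mulnDl subnKC.
      rewrite !mulnDr; move: h1 h2 h3 eV.
      move: (n * _)%N (n * _)%N (n * _)%N (n * _)%N (j * V)%N ((m-j)*V)%N (iG * V)%N (iR * V)%N.
      lia.
    by rewrite ltn_mul2l => /andP [].
  have ri : (m - j < iR)%N by move: jm ij; rewrite /m; lia.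
  have := sR _ ri rj => h1 h2 h3.
  have : (n * (vq q G`_iG + vq q r`_iR) < n * (vq q G`_j + vq q r`_(m - j)))%N.
    have eV : (j * V + (m - j) * V = iG * V + iR * V)%N by rewrite -!mulnDl subnKC.
    rewrite !mulnDr; move: h1 h2 h3 eV.
    move: (n * _)%N (n * _)%N (n * _)%N (n * _)%N (j * V)%N ((m-j)*V)%N (iG * V)%N (iR * V)%N.
    lia.
  by rewrite ltn_mul2l => /andP [].
have Tn0 : G`_iG * r`_iR != 0 by rewrite mulf_neq0.
have Tnd : ~~ ((q ^ e.+1)%:Z %| G`_iG * r`_iR)%Z by rewrite vq_dvd // -/e ltnn.
rewrite coefM (bigD1 (Ordinal (leq_addr iR iG : (iG < m.+1)%N))) //=.
have -> : (m - iG)%N = iR by rewrite /m addKn.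
set rest := (X in _ + X).
have Hrest : ((q ^ e.+1)%:Z %| rest)%Z by apply: rpred_sum => j /claim.
have Hnd : ~~ ((q ^ e.+1)%:Z %| G`_iG * r`_iR + rest)%Z.
  apply: contra Tnd => h. have := rpredB h Hrest. by rewrite addrK.
have Fn0 : G`_iG * r`_iR + rest != 0 by apply: contraNneq Hnd => ->; exact: dvdz0.
split => //.
have He : vq q (G`_iG * r`_iR + rest) = e.
  apply/eqP; rewrite eqn_leq; apply/andP; split.
    by move: Hnd; rewrite vq_dvd // -ltnNge ltnS.
  rewrite -vq_dvd //; apply: rpredD; first by rewrite vq_dvd.
  apply: dvdz_trans Hrest; rewrite dvdzE /=; exact: dvdn_exp2l.
by rewrite He eE /m mulnDr mulnDl addnACA.
Qed.

Lemma core q n V k (F G r : {poly int}) :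
  prime q -> F = G * r -> size G = k.+1 -> size r = (n - k).+1 -> (k <= n)%N ->
  vq q (lead_coef G) = 0%N -> vq q (lead_coef r) = 0%N ->
  F`_0 != 0 -> vq q F`_0 = V ->
  (forall i, F`_i != 0 -> (n * V <= n * vq q F`_i + i * V)%N) ->
  (n * vq q G`_0 = k * V)%N.
Proof.
move=> pq FE sG sr kn lG lr F00 vF0 hF.
have G0 : G != 0 by rewrite -size_poly_gt0 sG.
have r0 : r != 0 by rewrite -size_poly_gt0 sr.
have F0E : F`_0 = G`_0 * r`_0 by rewrite FE coef0M.
have G00 : G`_0 != 0 by apply: contraNneq F00; rewrite F0E => ->; rewrite mul0r.
have r00 : r`_0 != 0 by apply: contraNneq F00; rewrite F0E => ->; rewrite mulr0.
have vF0' : (vq q G`_0 + vq q r`_0)%N = V by rewrite -vqM // -F0E.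
have [iG [GiG wG sGm]] := @minw G (wt q n V G) G0.
have [iR [riR wR sRm]] := @minw r (wt q n V r) r0.
have [Fm wF] := @prodmin q n V G r iG iR pq GiG riR sGm wG sRm wR.
rewrite -FE in Fm wF.
have iG0 : iG = 0%N /\ iR = 0%N.
  case: (posnP iG) => [->|iGp]; case: (posnP iR) => [->|iRp] => //;
  have := hF _ Fm; rewrite /wt in wF; rewrite wF;
  have := wG _ G00; have := wR _ r00; rewrite /wt !mul0n !addn0;
  try (have := sGm _ iGp G00; rewrite /wt mul0n addn0);
  try (have := sRm _ iRp r00; rewrite /wt mul0n addn0);
  rewrite -vF0' mulnDr; lia.
case: iG0 => iG00 iR00; subst iG iR.
have h1 := wG k; have h2 := wR (n - k)%N.
move: h1 h2; rewrite /wt !mul0n !addn0.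
have Gk : G`_k = lead_coef G by rewrite lead_coefE sG.
have rk : r`_(n - k) = lead_coef r by rewrite lead_coefE sr.
rewrite Gk rk lG lr !muln0 !add0n.
have -> : lead_coef G != 0 by rewrite lead_coef_eq0.
have -> : lead_coef r != 0 by rewrite lead_coef_eq0.
move=> /(_ isT) h1 /(_ isT) h2.
have e : (k * V + (n - k) * V = n * V)%N by rewrite -mulnDl subnKC.
have nV : (n * V = n * vq q G`_0 + n * vq q r`_0)%N by rewrite -vF0' mulnDr.
move: h1 h2 e nV.
move: (n * vq q G`_0)%N (n * vq q r`_0)%N (k * V)%N ((n-k)*V)%N (n * V)%N; lia.
Qed.

Definition bcoef (n j : nat) : nat :=
  ('C(n - j, j) + (if j is j'.+1 then 'C((n - j).-1, j') else 0))%N.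

Lemma bcoefE n j : (j <= n)%N -> ((n - j) * bcoef n j = n * 'C(n - j, j))%N.
Proof.
move=> jn; rewrite /bcoef mulnDr; case: j jn => [|j] jn.
  by rewrite !subn0 muln0 addn0 bin0.
rewrite mul_bin_diag -mulnDl subnK //.
Qed.

Definition FZ (n : nat) (d R : int) : {poly int} :=
  let D := Dval d R in
  \sum_(j < (n.-1)./2.+1)
     (((-1) ^+ j * (bcoef n j)%:Z * D ^+ j) *: 'X^((n - 2 * j)%N))
  - (2 * d * D ^+ (n.-1)./2)%:P.

Lemma fE n d R : (0 < n)%N -> f_poly n d R = map_poly intr (FZ n d R).
Proof.
move=> n0; rewrite /f_poly /FZ [RHS]raddfB raddf_sum /= map_polyC /=.
congr (_ - _); last by congr (_%:P); rewrite !rmorphM rmorphXn.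
apply: eq_bigr => j _; rewrite map_polyZ /= map_polyXn; congr (_ *: _).
have jn : (j <= n)%N.
  have := ltn_ord j; move: n0; lia.
have jn' : (j < n)%N.
  have := ltn_ord j; move: n0; lia.
have := bcoefE n j jn => /(congr1 (fun x => x%:R : rat)); rewrite !natrM => h.
rewrite !rmorphM /= rmorphXn rmorphN1 /=.
have nj : ((n - j)%N%:R : rat) != 0 by rewrite pnatr_eq0 subn_eq0 -ltnNge.
have -> : ((bcoef n j)%:Z%:~R : rat) = (bcoef n j)%:R by [].
have -> : (bcoef n j)%:R = (n%:R / (n - j)%N%:R * 'C(n - j, j)%:R : rat).
  apply: (mulfI nj); rewrite h; field; exact: nj.
congr (_ * _); [by rewrite !mulrA | elim: (nat_of_ord j) => [|k IH]; by rewrite ?expr0 // !exprS intrM IH].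
Qed.

Lemma FZ_coef n d R i : (FZ n d R)`_i =
  \sum_(j < (n.-1)./2.+1) ((-1) ^+ j * (bcoef n j)%:Z * Dval d R ^+ j) *
      (i == n - 2 * j)%N%:R
  - (2 * d * Dval d R ^+ (n.-1)./2) * (i == 0)%N%:R.
Proof.
rewrite /FZ coefB coef_sum coefC; congr (_ - _).
  by apply: eq_bigr => j _; rewrite coefZ coefXn.
by case: (i == 0)%N; rewrite ?mulr1 ?mulr0.
Qed.

Lemma A1 n h j : n = h.*2.+1 -> (j < h.+1)%N -> (n - 2 * j)%N != 0%N.
Proof. lia. Qed.
Lemma A2 n h j : n = h.*2.+1 -> (j < h.+1)%N -> (0 < j)%N -> (n == n - 2 * j)%N = false.
Proof. lia. Qed.
Lemma A3 n h j j' i : n = h.*2.+1 -> (j < h.+1)%N -> (j' < h.+1)%N ->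
  i = (n - 2 * j)%N -> i = (n - 2 * j')%N -> j = j'.
Proof. lia. Qed.

Section Coefs.
Variables (n : nat) (d R : int).
Hypothesis nodd : odd n.
Hypothesis n3 : (3 <= n)%N.
Let h := (n.-1)./2.
Lemma nE : n = (h.*2).+1.
Proof.
rewrite /h; have := odd_double_half n.-1.
have : odd n.-1 = false.
  by move: nodd n3; case: n => [|m] //= /negbTE.
move=> -> /=; rewrite add0n => ->; move: n3; lia.
Qed.

Lemma idx_ne0 (j : 'I_h.+1) : (n - 2 * j)%N != 0%N.
Proof. exact: A1 nE (ltn_ord j). Qed.

Lemma FZ_coef0 : (FZ n d R)`_0 = - (2 * d * Dval d R ^+ h).
Proof.
rewrite FZ_coef big1 ?sub0r ?mulr1 // => j _.
by rewrite eq_sym (negbTE (idx_ne0 j)) mulr0.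
Qed.

Lemma FZ_coefn : (FZ n d R)`_n = 1.
Proof.
have n0 : (n == 0)%N = false by have := n3; lia.
rewrite FZ_coef n0 mulr0 subr0 (bigD1 ord0) //= big1 ?addr0.
  by rewrite subn0 eqxx expr0 mul1r mulr1 /bcoef subn0 bin0.
move=> j jne; have : (0 < j)%N by rewrite lt0n; apply: contra jne => /eqP jj; apply/eqP/val_inj.
move=> jp; have : (n == n - 2 * j)%N = false.
  exact: A2 nE (ltn_ord j) jp.
by move=> ->; rewrite mulr0.
Qed.

Lemma FZ_coef_big i : (n < i)%N -> (FZ n d R)`_i = 0.
Proof.
move=> ni; rewrite FZ_coef big1.
  have -> : (i == 0)%N = false by lia.
  by rewrite mulr0 subr0.
move=> j _; have -> : (i == n - 2 * j)%N = false by lia.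
by rewrite mulr0.
Qed.

Lemma size_FZ : size (FZ n d R) = n.+1.
Proof.
apply/eqP; rewrite eqn_leq; apply/andP; split.
  apply/leq_sizeP => j; exact: FZ_coef_big.
rewrite ltnNge; apply/negP => /leq_sizeP /(_ n (leqnn n)).
by rewrite FZ_coefn => /eqP; rewrite oner_eq0.
Qed.

Lemma lead_FZ : lead_coef (FZ n d R) = 1.
Proof. by rewrite lead_coefE size_FZ FZ_coefn. Qed.

Lemma FZ_coef_pos i : (0 < i)%N -> (FZ n d R)`_i != 0 ->
  exists j : nat, [/\ (j <= h)%N, i = (n - 2 * j)%N & (Dval d R ^+ j %| (FZ n d R)`_i)%Z].
Proof.
move=> ip Fi.
have i0 : (i == 0)%N = false by lia.
move: Fi; rewrite FZ_coef i0 mulr0 subr0 => Fi.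
have [j /eqP ij] : exists j : 'I_h.+1, (i == n - 2 * j)%N.
  apply/existsP; apply: contraNT Fi; rewrite negb_exists => /forallP H.
  by rewrite big1 // => j _; rewrite (negbTE (H j)) mulr0.
exists j; split => //; first by rewrite -ltnS.
apply: rpred_sum => j' _.
have [ij'|nij'] := eqVneq i (n - 2 * j')%N.
  have jj : j' = j.
    apply/val_inj => /=; exact: A3 nE (ltn_ord j') (ltn_ord j) ij' ij.
  by rewrite jj; apply: dvdz_mulr; apply: dvdz_mull; exact: dvdzz.
by rewrite mulr0; exact: dvdz0.
Qed.

End Coefs.

Lemma A4 n h j x v: n = h.*2.+1 -> (j <= h)%N -> (j*x <= v)%N ->
  (n*(h*x) <= n*v + (n-2*j)*(h*x))%N.
Proof. nia. Qed.

Lemma vq0 q (x : int) : prime q -> ~~ (q %| `|x|)%N -> vq q x = 0%N.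
Proof.
move=> pq nd; apply/eqP; rewrite -leqn0 leqNgt logn_gt0 mem_primes pq /=.
by rewrite (negbTE nd) andbF.
Qed.

Lemma key n d R q (G r : {poly int}) k :
  odd n -> (3 <= n)%N -> gcdz d R = 1%N ->
  prime q -> (3 <= q)%N -> odd (vq q (Dval d R)) ->
  FZ n d R = G * r -> size G = k.+1 -> size r = (n - k).+1 -> (k <= n)%N ->
  vq q (lead_coef G) = 0%N -> vq q (lead_coef r) = 0%N ->
  (n * vq q G`_0 = k * ((n.-1)./2 * vq q (Dval d R)))%N.
Proof.
move=> nodd n3 g1 pq q3 vodd FE sG sr kn lG lr.
set D := Dval d R; set h := (n.-1)./2; set vD := vq q D.
have D0 : D != 0 by apply/eqP => E; move: vodd; rewrite -/D E /vq /= logn0.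
have qD : (q%:Z %| D)%Z.
  have := vq_dvd q 1 D pq D0; rewrite expn1 => ->; rewrite -/vD.
  by move: vodd; rewrite -/vD; case: vD.
have qd : ~~ (q %| `|d|)%N.
  apply/negP => qd.
  have qdz : (q%:Z %| d)%Z by [].
  have qR : (q%:Z %| R)%Z.
    have -> : R = d ^+ 2 - D by rewrite /D /Dval opprB addrC subrK.
    apply: rpredB => //; rewrite expr2; exact: dvdz_mulr.
  have : (q%:Z %| gcdz d R)%Z by rewrite dvdz_gcd qdz qR.
  rewrite g1 dvdzE /= dvdn1 => /eqP q1; by rewrite q1 in pq.
have F0 : (FZ n d R)`_0 = - (2 * d * D ^+ h) := FZ_coef0 n d R nodd n3.
have d0 : d != 0 by apply: contraNneq qd => ->; rewrite dvdn0.
have F00 : (FZ n d R)`_0 != 0.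
  by rewrite F0 oppr_eq0 !mulf_neq0 // expf_neq0.
have vF0 : vq q (FZ n d R)`_0 = (h * vD)%N.
  rewrite F0 /vq abszN -/(vq q _) vqM ?mulf_neq0 ?expf_neq0 // vqM ?expf_neq0 //.
  rewrite (vq0 q 2) // ?(vq0 q d pq qd) /vq ?abszX ?lognX //.
  apply/negP => /dvdn_leq; move: q3; rewrite /=; lia.
apply: (core q n (h * vD) k (FZ n d R) G r pq FE sG sr kn lG lr F00 vF0) => i Fi.
case: (posnP i) => [i0|ip].
  by subst i; rewrite vF0 mul0n addn0.
have [j [jh iE Dd]] := FZ_coef_pos n d R nodd n3 i ip Fi.
have jv : (j * vD <= vq q (FZ n d R)`_i)%N.
  rewrite -vq_dvd //; apply: dvdz_trans Dd.
  rewrite dvdzE /= abszX mulnC expnM; apply: dvdn_exp2r.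
  exact: pfactor_dvdnn.
by have := @A4 _ _ _ _ _ (nE n nodd n3) jh jv; rewrite -iE.
Qed.

Local Notation pZtoQ := (map_poly (intr : int -> rat)).

Lemma vq_unit q (a b : int) : a * b = 1 -> vq q a = 0%N.
Proof.
move=> ab; have : (`|a| * `|b| = 1)%N by rewrite -abszM ab.
by move/eqP; rewrite muln_eq1 => /andP [/eqP ha _]; rewrite /vq ha logn1.
Qed.

Theorem proposition7 (n : nat) (d R : int) :
  (3 <= n)%N -> odd n ->
  d != 0 ->
  ~ (exists m : int, R = m ^+ 2) ->
  gcdz d R = 1%N ->
  (forall p : nat, prime p -> (p %| n)%N ->
     exists q : nat, [/\ prime q, (3 <= q)%N,
                        odd (vq q (Dval d R)) & ~~ (p %| vq q (Dval d R))%N]) ->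
  irreducible_poly (f_poly n d R).
Proof.
move=> n3 nodd d0 Rns g1 hp.
have n0 : (0 < n)%N by move: n3; lia.
rewrite (fE n d R n0).
have sF := size_FZ n d R nodd n3.
have lF := lead_FZ n d R nodd n3.
split; first by rewrite size_rat_int_poly sF.
move=> g sg gd.
case/dvdpP_rat_int: (gd) => G [a a0 gE] [r FE].
rewrite -dvdp_size_eqp // gE size_scale // !size_rat_int_poly sF.
move: sg; rewrite gE size_scale // size_rat_int_poly => sG1.
apply/negPn/negP => sGn.
have F0 : FZ n d R != 0 by rewrite -size_poly_gt0 sF.
have G0 : G != 0 by apply: contraNneq F0; rewrite FE => ->; rewrite mul0r.
have r0 : r != 0 by apply: contraNneq F0; rewrite FE => ->; rewrite mulr0.
have ss : (size G + size r).-1 = n.+1 by rewrite -size_mul // -FE.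
have sGp : (0 < size G)%N by rewrite size_poly_gt0.
have srp : (0 < size r)%N by rewrite size_poly_gt0.
set k := (size G).-1.
have sGk : size G = k.+1 by rewrite /k prednK.
have kn : (k <= n)%N by move: ss; rewrite /k; lia.
have srk : size r = (n - k).+1 by move: ss; rewrite /k; lia.
have k0 : (0 < k)%N by move: sG1 sGk; rewrite /k; case: (size G) => [|[|]] //=.
have kn' : (k < n)%N by move: sGn; rewrite sGk ltn_neqAle eqSS kn andbT.
have lGr : lead_coef G * lead_coef r = 1 by rewrite -lead_coefM -FE.
have lGr' : lead_coef r * lead_coef G = 1 by rewrite mulrC.
have : (n %| k)%N.
  apply/dvdn_partP => // p; rewrite mem_primes => /and3P [pp _ pn].
  have [q [qp q3 vodd pnd]] := hp p pp pn.
  have := key n d R q G r k nodd n3 g1 qp q3 vodd FE sGk srk kn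
    (vq_unit q _ _ lGr) (vq_unit q _ _ lGr').
  move=> E; rewrite p_part.
  have cop : coprime (p ^ logn p n) ((n.-1)./2 * vq q (Dval d R)).
    apply: coprimeXl; rewrite coprimeMr !prime_coprime // pnd andbT.
    apply/negP => ph.
    have hn := nE n nodd n3.
    have : (p %| n.-1)%N.
      have -> : n.-1 = ((n.-1)./2).*2 by rewrite {1}hn.
      by rewrite -muln2; apply: dvdn_mulr.
    move=> pn1; have : (p %| n - n.-1)%N by rewrite dvdn_sub.
    have -> : (n - n.-1 = 1)%N by rewrite -subn1 subKn.
    by rewrite dvdn1 => /eqP p1; rewrite p1 in pp.
  rewrite -(Gauss_dvdl _ cop) -E; apply: dvdn_mulr; exact: pfactor_dvdnn.
move/dvdn_leq => /(_ k0); move: kn'; lia.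
Qed.
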